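(* Let $X,Y$ be metric spaces and equip $X\times Y$ with the $\ell^1$-metric. For any two Borel probability measures $\pi,\pi'$ on $X\times Y$, \[ |\operatorname{dis}\pi-\operatorname{dis}\pi'|\le 2\,d_{\mathrm P}(\pi,\pi'). \]
   Context: For nonempty $S\subset X\times Y$, $\operatorname{dis}S:=\sup\{|d_X(x,x')-d_Y(y,y')|:(x,y),(x',y')\in S\}$, $\operatorname{dis}\emptyset:=\infty$; for a Borel probability measure $\pi$ on $X\times Y$, $\operatorname{dis}\pi:=\inf_S\max\{\operatorname{dis}S,1-\pi(S)\}$ over closed $S\subset X\times Y$. $d_{\mathrm P}$ is the Prohorov metric on the $\ell^1$-product: $d_{\mathrm P}(\mu,\nu):=\inf\{\varepsilon>0:\mu(U_\varepsilon(A))\ge\nu(A)-\varepsilon\ \forall\text{ Borel }A\}$, $U_\varepsilon(A)$ the open $\varepsilon$-neighborhood. *)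

(* Defs.v *)
From HB Require Import structures.
From mathcomp Require Import all_boot all_order all_algebra.
From mathcomp Require Import all_classical all_reals all_analysis.
Set Implicit Arguments. Unset Strict Implicit. Unset Printing Implicit Defensive.
Import Order.TTheory GRing.Theory Num.Theory.
Local Open Scope classical_set_scope.
Local Open Scope ring_scope.

Section Defs.
Variable R : realType.

Definition is_metric (T : Type) (d : T -> T -> R) : Prop :=
  (forall x y, d x y = 0 <-> x = y) /\
  (forall x y, d x y = d y x) /\
  (forall x y z, d x z <= d x y + d y z).

Variables (X Y : Type) (dX : X -> X -> R) (dY : Y -> Y -> R).

Definition dl1 (p q : X * Y) : R := dX p.1 q.1 + dY p.2 q.2.

Definition Uepsl1 (e : R) (A : set (X * Y)) : set (X * Y) :=
  [set p | exists2 a, A a & dl1 p a < e].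

Definition openl1 (A : set (X * Y)) : Prop :=
  forall p, A p -> exists2 e : R, 0 < e & [set q | dl1 p q < e] `<=` A.

Definition closedl1 (A : set (X * Y)) : Prop := openl1 (~` A).

Definition borell1 (A : set (X * Y)) : Prop :=
  smallest (sigma_algebra setT) openl1 A.

(* Borel probability measure on X * Y (values outside Borel sets irrelevant) *)
Definition is_borel_prob (pi : set (X * Y) -> \bar R) : Prop :=
  pi set0 = 0%E /\
  (forall A, borell1 A -> (0 <= pi A)%E) /\
  (forall F : nat -> set (X * Y), (forall n, borell1 (F n)) ->
     trivIset setT F ->
     (fun n => (\sum_(k < n) pi (F k))%E) @ \oo --> pi (\bigcup_k F k)) /\
  pi setT = 1%E.

Definition dis_set (S : set (X * Y)) : \bar R :=
  if `[< S = set0 >] then +oo%E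
  else ereal_sup [set (`|dX p.1 q.1 - dY p.2 q.2|)%:E
                 | p in S & q in S].

Definition dis_meas (pi : set (X * Y) -> \bar R) : \bar R :=
  ereal_inf [set Order.max (dis_set S) (1 - pi S)%E | S in closedl1].

Definition prohorov (mu nu : set (X * Y) -> \bar R) : \bar R :=
  ereal_inf [set e%:E | e in [set e : R | 0 < e /\
     forall A, borell1 A -> (nu A - e%:E <= mu (Uepsl1 e A))%E]].

End Defs.

(* Main.v *)
Require Import Defs.
From HB Require Import structures.
From mathcomp Require Import all_boot all_order all_algebra.
From mathcomp Require Import all_classical all_reals all_analysis.
From mathcomp Require Import lra.
From Stdlib Require Import Classical.
Import Order.TTheory GRing.Theory Num.Theory.
Local Open Scope classical_set_scope.
Local Open Scope ring_scope.

Lemma metric_ge0 (R : realType) (T : Type) (d : T -> T -> R) :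
  is_metric d -> forall x y, 0 <= d x y.
Proof.
move=> [h0 [hs ht]] x y; have := ht x y x; rewrite (proj2 (h0 x x) erefl) (hs y x).
lra.
Qed.

Arguments metric_ge0 {R T d}.
Section Met.
Variables (R : realType) (X Y : Type) (dX : X -> X -> R) (dY : Y -> Y -> R).
Hypotheses (hX : is_metric dX) (hY : is_metric dY).
Local Notation d := (dl1 dX dY).

Lemma d_ge0 p q : 0 <= d p q.
Proof. rewrite /dl1; have := metric_ge0 hX p.1 q.1; have := metric_ge0 hY p.2 q.2; lra. Qed.

Lemma dC p q : d p q = d q p.
Proof. by rewrite /dl1 (proj1 (proj2 hX)) (proj1 (proj2 hY)). Qed.

Lemma dtr p q r : d p r <= d p q + d q r.
Proof.
rewrite /dl1; have := proj2 (proj2 hX) p.1 q.1 r.1; have := proj2 (proj2 hY) p.2 q.2 r.2; lra.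
Qed.

Lemma dxx p : d p p = 0.
Proof. by rewrite /dl1 (proj2 (proj1 hX _ _) erefl) (proj2 (proj1 hY _ _) erefl) addr0. Qed.

Lemma d0 p q : d p q = 0 -> p = q.
Proof.
rewrite /dl1 => h; have a := metric_ge0 hX p.1 q.1; have b := metric_ge0 hY p.2 q.2.
have h1 : dX p.1 q.1 = 0 by lra.
have h2 : dY p.2 q.2 = 0 by lra.
by case: p q h1 h2 {h a b} => [x y] [x' y'] /= /(proj1 (proj1 hX _ _)) -> /(proj1 (proj1 hY _ _)) ->.
Qed.

Lemma distortion_bound p q s t :
  `|dX p.1 q.1 - dY p.2 q.2| <= `|dX s.1 t.1 - dY s.2 t.2| + d p s + d q t.
Proof.
rewrite /dl1.
have [_ [sX tX]] := hX; have [_ [sY tY]] := hY.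
have := tX p.1 s.1 q.1; have := tX s.1 t.1 q.1; have := tX s.1 p.1 t.1; have := tX p.1 q.1 t.1.
have := tY p.2 s.2 q.2; have := tY s.2 t.2 q.2; have := tY s.2 p.2 t.2; have := tY p.2 q.2 t.2.
have := sX s.1 p.1; have := sY s.2 p.2; have := sX t.1 q.1; have := sY t.2 q.2.
have := ler_norm (dX s.1 t.1 - dY s.2 t.2).
have := ler_norm (- (dX s.1 t.1 - dY s.2 t.2)); rewrite normrN.
rewrite ler_norml; lra.
Qed.

Lemma openU e A : openl1 dX dY (Uepsl1 dX dY e A).
Proof.
move=> p [a Aa hpa]; exists (e - d p a).   by rewrite subr_gt0.
move=> q /= hq; exists a => //; have := dtr q p a; rewrite (dC q p); lra.
Qed.

Definition Tc e A := [set p | forall r, 0 < r -> exists2 q, Uepsl1 dX dY e A q & d p q < r].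

Lemma closedTc e A : closedl1 dX dY (Tc e A).
Proof.
move=> p /= np.
have [r r0 hr] : exists2 r, 0 < r & forall q, Uepsl1 dX dY e A q -> r <= d p q.
  apply: NNPP => hn; apply: np => r r0; apply: NNPP => hq; apply: hn; exists r => // q Uq.
  by rewrite leNgt; apply/negP => hlt; apply: hq; exists q.
exists (r / 2); first by lra.
move=> p' /= hp' Tp'; have [q Uq hq] := Tp' (r / 2) ltac:(lra).
have := hr q Uq; have := dtr p p' q; lra.
Qed.

Lemma closed1 p : closedl1 dX dY [set p].
Proof.
move=> q /= nq; exists (d q p).
  rewrite lt_neqAle d_ge0 andbT; apply/eqP => /esym /d0 qp; exact: nq.
by move=> r /= hr rp; move: hr; rewrite rp ltxx.
Qed.


Section Prob.
Let B := borell1 dX dY.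

Lemma borel_sa : sigma_algebra setT B.
Proof. exact: (@smallest_sigma_algebra _ setT (openl1 dX dY)). Qed.

Lemma borel_open A : openl1 dX dY A -> B A.
Proof. by move=> oA P [_ ]; apply. Qed.

Lemma borel0 : B set0.
Proof. by case: borel_sa. Qed.

Lemma borelC A : B A -> B (~` A).
Proof. by case: borel_sa => _ h _ /h; rewrite setTD. Qed.

Lemma borelT : B setT.
Proof. by rewrite -setC0; apply: borelC; apply: borel0. Qed.

Lemma borel_closed A : closedl1 dX dY A -> B A.
Proof. by move=> /borel_open /borelC; rewrite setCK. Qed.

Lemma borelU A C : B A -> B C -> B (A `|` C).
Proof.
move=> hA hC; case: borel_sa => _ _ h.
have := h (fun n => if n == 0%N then A else C).
rewrite (_ : \bigcup_k _ = A `|` C); first by apply => n; case: ifP.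
apply/seteqP; split => [x [n _]|x [Ax|Cx]]; first by case: ifP => _ ?; [left|right].
  by exists 0%N.
by exists 1%N.
Qed.

Lemma borelI A C : B A -> B C -> B (A `&` C).
Proof.
move=> hA hC; rewrite -[A `&` C]setCK setCI; apply: borelC; apply: borelU; exact: borelC.
Qed.

Lemma borelD A C : B A -> B C -> B (A `\` C).
Proof. by move=> hA hC; apply: borelI => //; apply: borelC. Qed.

Variable pi : set (X * Y) -> \bar R.
Hypothesis hpi : is_borel_prob dX dY pi.

Lemma probU A C : B A -> B C -> A `&` C = set0 -> pi (A `|` C) = (pi A + pi C)%E.
Proof.
move=> hA hC AC; case: hpi => p0 [_ [h _]].
pose F := fun n => if n == 0%N then A else if n == 1%N then C else set0.
have FB n : B (F n) by rewrite /F; case: ifP => _ //; case: ifP => _ //; exact: borel0.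
have tF : trivIset setT F.
  move=> i j _ _ [x [Fi Fj]]; move: Fi Fj; rewrite /F.
  case: i => [|[|i]] /=; case: j => [|[|j]] //=.
  - by move=> Ax Cx; have : (A `&` C) x by []; rewrite AC.
  - by move=> Cx Ax; have : (A `&` C) x by []; rewrite AC.
have := h F FB tF.
rewrite (_ : \bigcup_k F k = A `|` C); last first.
  apply/seteqP; split => [x [n _]|x [Ax|Cx]].
  - rewrite /F; case: ifP => _ Fx; first by left.
    by move: Fx; case: ifP => // _ Fx; right.
  - by exists 0%N.
  - by exists 1%N.
move=> hc.
have hc2 : (fun n => (\sum_(k < n) pi (F k))%E) @ \oo --> (pi A + pi C)%E.
  apply: cvg_near_cst; near=> n.
have n2 : (2 <= n)%N by near: n; exists 2%N.
rewrite -(subnKC n2) big_split_ord /= !big_ord_recr big_ord0 /= add0e.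
  rewrite big1 ?adde0 //.
exact: (cvg_unique _ hc hc2).
Unshelve. all: by end_near.
Qed.

Lemma probM A C : B A -> B C -> A `<=` C -> (pi A <= pi C)%E.
Proof.
move=> hA hC sAC; have hD := borelD _ _ hC hA.
rewrite -(setDUK sAC) probU //.
  by apply: leeDl; case: hpi => _ [h _]; apply: h.
by apply/seteqP; split => x // [Ax [_ ]].
Qed.

Lemma probF A : B A -> pi A = (fine (pi A))%:E /\ 0 <= fine (pi A) <= 1.
Proof.
move=> hA; have h0 : (0 <= pi A)%E by case: hpi => _ [h _]; apply: h.
have h1 : (pi A <= 1)%E.
  by case: hpi => _ [_ [_ <-]]; apply: probM => //; exact: borelT.
by move: h0 h1; case: (pi A) => [r| |] //=; rewrite !lee_fin => -> ->.
Qed.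

Lemma probC A : B A -> fine (pi (~` A)) = 1 - fine (pi A).
Proof.
move=> hA; have hA' := borelC _ hA.
have := probU _ _ hA hA' (setICr A); rewrite setUv.
case: hpi => _ [_ [_ ->]].
case: (probF _ hA) => -> _; case: (probF _ hA') => -> _.
move=> /esym/eqP; rewrite -EFinD eqe => /eqP <-; rewrite /=; lra.
Qed.
End Prob.

Notation Bo := (borell1 dX dY).
Notation U := (Uepsl1 dX dY).

Lemma Tc_ne e S : 0 < e -> S !=set0 -> Tc e S !=set0.
Proof.
move=> e0 [s Ss]; exists s => r r0; exists s; last by rewrite dxx.
by exists s => //; rewrite dxx.
Qed.

Lemma dis_setE S : S !=set0 -> dis_set dX dY S =
  ereal_sup [set (`|dX p.1 q.1 - dY p.2 q.2|)%:E | p in S & q in S].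
Proof.
move=> [s Ss]; rewrite /dis_set asboolF // => S0.
by have : set0 s by rewrite -S0.
Qed.

Lemma disTc e S : 0 < e -> S !=set0 ->
  (dis_set dX dY (Tc e S) <= dis_set dX dY S + (2 * e)%:E)%E.
Proof.
move=> e0 Sne; rewrite (dis_setE _ (Tc_ne _ _ e0 Sne)) (dis_setE _ Sne).
case: Sne => s Ss.
set D := (X in (_ <= X + _)%E).
have D0 : (0%:E <= D)%E.
  apply: (@le_trans _ _ (`|dX s.1 s.1 - dY s.2 s.2|)%:E); first by rewrite lee_fin.
  by apply: ereal_sup_ubound; exists s => //; exists s.
case eD: D D0 => [r| |] // _; last by rewrite addye // leey.
apply: ge_ereal_sup => z [p Tp [q Tq <-]].
rewrite -EFinD lee_fin; apply/ler_addgt0Pr => r' r0.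
have [p' [a Sa hp'a] hpp'] := Tp (r' / 2) ltac:(lra).
have [q' [b Sb hq'b] hqq'] := Tq (r' / 2) ltac:(lra).
have hab : (`|dX a.1 b.1 - dY a.2 b.2|%:E <= r%:E)%E.
  by rewrite -eD; apply: ereal_sup_ubound; exists a => //; exists b.
rewrite lee_fin in hab.
have := distortion_bound p q a b; have := dtr p p' a; have := dtr q q' b.
lra.
Qed.


Lemma oneBE (r : R) : (1 - r%:E = (1 - r)%:E)%E. Proof. by []. Qed.

Lemma U_borel e A : Bo (U e A).
Proof. apply: borel_open; exact: openU. Qed.

Lemma dis_ge0 mu : is_borel_prob dX dY mu -> (0 <= dis_meas dX dY mu)%E.
Proof.
move=> hmu; apply: le_ereal_inf_tmp => _ [S cS <-].
rewrite le_max; apply/orP; right.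
have [-> /andP[_ h1]] := probF mu hmu S (borel_closed _ cS).
by rewrite oneBE lee_fin subr_ge0.
Qed.

Lemma dis_le1 mu : is_borel_prob dX dY mu -> (dis_meas dX dY mu <= 1)%E.
Proof.
move=> hmu.
have [p _] : exists p : X * Y, True.
  apply: NNPP => hn; have hT : [set: X * Y] = set0.
    by apply/seteqP; split => // x _; apply: hn; exists x.
  case: hmu => h0 [_ [_ h1]]; move: h1; rewrite hT h0 => /eqP.
  by rewrite eq_sym onee_eq0.
apply: ge_ereal_inf; exists (Order.max (dis_set dX dY [set p]) (1 - mu [set p])%E).
  by exists [set p] => //; exact: closed1.
rewrite ge_max; apply/andP; split.
  rewrite dis_setE; last by exists p.
  apply: ge_ereal_sup => _ [a /= -> [b /= -> <-]].
  by rewrite (proj2 (proj1 hX _ _) erefl) (proj2 (proj1 hY _ _) erefl) subr0 normr0 lee_fin.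
have [-> /andP[h0 _]] := probF mu hmu [set p] (borel_closed _ (closed1 p)).
by rewrite oneBE lee_fin; lra.
Qed.

Lemma proh_sym mu nu e : is_borel_prob dX dY mu -> is_borel_prob dX dY nu ->
  (forall A, Bo A -> (nu A - e%:E <= mu (U e A))%E) ->
  forall A, Bo A -> (mu A - e%:E <= nu (U e A))%E.
Proof.
move=> hmu hnu h A hA.
set C := ~` U e A.
have hC : Bo C by apply: borelC; apply: U_borel.
have := h C hC.
have AC : A `<=` ~` U e C.
  move=> x Ax [c Cc hxc]; apply: Cc; exists x => //; by rewrite dC.
have := probM mu hmu _ _ hA (borelC _ (U_borel e C)) AC.
have := probC mu hmu _ (U_borel e C).
have := probC nu hnu _ (U_borel e A).
have [-> _] := probF mu hmu _ hA.
have [-> _] := probF mu hmu _ (borelC _ (U_borel e C)).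
have [-> _] := probF mu hmu _ (U_borel e C).
have [-> _] := probF nu hnu _ hC.
have [-> _] := probF nu hnu _ (U_borel e A).
rewrite /C => h1 h2; rewrite -!EFinB !lee_fin; lra.
Qed.

Lemma dis_step mu nu e : is_borel_prob dX dY mu -> is_borel_prob dX dY nu -> 0 < e ->
  (forall A, Bo A -> (nu A - e%:E <= mu (U e A))%E) ->
  (dis_meas dX dY mu <= dis_meas dX dY nu + (2 * e)%:E)%E.
Proof.
move=> hmu hnu e0 h.
rewrite -leeBlDr //; apply: le_ereal_inf_tmp => _ [S cS <-].
rewrite leeBlDr //.
have [S0|Sne] := pselect (S = set0).
  rewrite /dis_set asboolT // (_ : Order.max _ _ = +oo%E) ?addye ?leey //.
  by apply/eqP; rewrite eq_le leey le_max lexx.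
apply: (@le_trans _ _ (Order.max (dis_set dX dY (Tc e S)) (1 - mu (Tc e S))%E)).
  by apply: ereal_inf_lbound; exists (Tc e S) => //; exact: closedTc.
have Sne' : S !=set0 by apply/set0P/eqP.
rewrite ge_max; apply/andP; split.
  apply: le_trans (disTc _ _ e0 Sne') _; apply: leeD2r; by rewrite le_max lexx.
have hS := borel_closed _ cS.
have hT := borel_closed _ (closedTc e S).
have UT : U e S `<=` Tc e S.
  by move=> p Up r r0; exists p => //; rewrite dxx.
have h2 := probM mu hmu _ _ (U_borel e S) hT UT.
have h1 := h S hS.
apply: (@le_trans _ _ ((1 - nu S) + (2 * e)%:E)%E); last first.
  by apply: leeD2r; rewrite le_max lexx orbT.
move: h1 h2.
have [-> _] := probF mu hmu _ hT.
have [-> _] := probF mu hmu _ (U_borel e S).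
have [-> _] := probF nu hnu _ hS.
rewrite oneBE -!EFinB -!EFinD !lee_fin => h1 h2; lra.
Qed.
End Met.

Theorem lemma4p6 (R : realType) (X Y : Type)
  (dX : X -> X -> R) (dY : Y -> Y -> R)
  (hX : is_metric dX) (hY : is_metric dY)
  (pi pi' : set (X * Y) -> \bar R)
  (hpi : is_borel_prob dX dY pi) (hpi' : is_borel_prob dX dY pi') :
  (`| dis_meas dX dY pi - dis_meas dX dY pi' | <= 2%:E * prohorov dX dY pi pi')%E.
Proof.
have fin : forall mu, is_borel_prob dX dY mu ->
    dis_meas dX dY mu = (fine (dis_meas dX dY mu))%:E.
  move=> mu hmu; have := @dis_ge0 _ _ _ _ _ _ hmu; have := @dis_le1 _ _ _ _ _ hX hY mu hmu.
  by case: (dis_meas dX dY mu).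
have key : forall e, 0 < e ->
    (forall A, borell1 dX dY A -> (pi' A - e%:E <= pi (Uepsl1 dX dY e A))%E) ->
    `|fine (dis_meas dX dY pi) - fine (dis_meas dX dY pi')| <= 2 * e.
  move=> e e0 he.
  have h1 := @dis_step _ _ _ _ _ hX hY pi pi' e hpi hpi' e0 he.
  have h2 := @dis_step _ _ _ _ _ hX hY pi' pi e hpi' hpi e0 (@proh_sym _ _ _ _ _ hX hY pi pi' e hpi hpi' he).
  rewrite (fin _ hpi) (fin _ hpi') -EFinD lee_fin in h1 h2.
  rewrite -EFinD lee_fin in h2; rewrite ler_norml; apply/andP; split; lra.
rewrite (fin _ hpi) (fin _ hpi') -EFinB abse_EFin.
set a := fine _; set b := fine _.
have kk : ((`|a - b| / 2)%:E <= prohorov dX dY pi pi')%E.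
  apply: le_ereal_inf_tmp => _ [e [e0 he] <-]; rewrite lee_fin.
  have := key e e0 he; rewrite -/a -/b; lra.
move: kk; case: (prohorov dX dY pi pi') => [r| |] //.
  by rewrite -EFinM !lee_fin => ?; lra.
by move=> _; rewrite mulry gtr0_sg // mul1e leey.
Qed.
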